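(* Let $\varepsilon>0$, $\rho>0$, $T\in\mathbb{N}^*$, let $w$ be a real random variable and $\mathbf{a}=(a_t)_{0\le t\le T}\in\mathbb{R}^{T+1}$ with $a_0\ne0$. Let $K>0$ be such that $|a_t|\le(K\rho)^t|a_0|$ for all $t\in\{0,\ldots,T-1\}$, $|a_T+\varepsilon|\le(K\rho)^T|a_0|$ and $|a_T-\varepsilon|\le(K\rho)^T|a_0|$. Then \[\mathbb{P}(|f(\mathbf{a},\rho w)|\ge\varepsilon)\ge\mathbb{P}(|w|\ge2K),\] where $f(\mathbf{a},\rho w)=\sum_{t=0}^Ta_{T-t}(\rho w)^t$. *)

(* Defs.v *)
From HB Require Import structures.
From mathcomp Require Import all_boot all_order all_algebra.
From mathcomp Require Import all_classical all_reals all_analysis.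
Set Implicit Arguments. Unset Strict Implicit. Unset Printing Implicit Defensive.
Import Order.TTheory GRing.Theory Num.Theory.
Local Open Scope ring_scope.

Definition fpoly (R : realType) (T : nat) (a : nat -> R) (x : R) : R :=
  \sum_(t < T.+1) a (T - t)%N * x ^+ t.

(* Main.v *)
Require Import Defs.
From HB Require Import structures.
From mathcomp Require Import all_boot all_order all_algebra.
From mathcomp Require Import all_classical all_reals all_analysis.
From mathcomp Require Import ring lra.
Import Order.TTheory GRing.Theory Num.Theory.
Local Open Scope classical_set_scope.
Local Open Scope ring_scope.

Lemma geo_bound (R : realType) (c u : R) (n : nat) : 0 <= c -> 2 * c <= u ->
  \sum_(t < n) c ^+ (n - t) * u ^+ t <= u ^+ n - c ^+ n.
Proof.
move=> c0 cu; have u0 : 0 <= u by lra.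
elim: n => [|n IH]; first by rewrite big_ord0 !expr0 subrr.
rewrite big_ord_recr /= subSnn expr1.
rewrite (eq_bigr (fun i : 'I_n => c * (c ^+ (n - i) * u ^+ i))); last first.
  by move=> i _; rewrite subSn ?(ltnW (ltn_ord i)) // exprS mulrA.
rewrite -mulr_sumr.
have h1 : c * (\sum_(i < n) c ^+ (n - i) * u ^+ i) <= c * (u ^+ n - c ^+ n).
  exact: ler_wpM2l.
have un : 0 <= u ^+ n by exact: exprn_ge0.
have h2 : 2 * c * u ^+ n <= u * u ^+ n by exact: ler_wpM2r.
rewrite !exprS; nra.
Qed.

Lemma fpoly_split (R : realType) (n : nat) (a : nat -> R) (y : R) :
  fpoly n.+1 a y = a n.+1 + (\sum_(i < n) a (n - i)%N * y ^+ i.+1 + a 0%N * y ^+ n.+1).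
Proof.
rewrite /fpoly big_ord_recl /= subn0 expr0 mulr1; congr (_ + _).
rewrite big_ord_recr /= subnn; congr (_ + _).
Qed.

Lemma pointwise (R : realType) (T : nat) (a : nat -> R) (eps c y : R) :
  0 < eps -> 0 < c -> (0 < T)%N -> a 0%N != 0 ->
  (forall t : nat, (t < T)%N -> `|a t| <= c ^+ t * `|a 0%N|) ->
  `|a T + eps| <= c ^+ T * `|a 0%N| ->
  `|a T - eps| <= c ^+ T * `|a 0%N| ->
  2 * c <= `|y| -> eps <= `|fpoly T a y|.
Proof.
move=> e0 c0; case: T => [//|n] _ a0 ha hp hm cy.
set u := `|y|.
have A0 : 0 < `|a 0%N| by rewrite normr_gt0.
have geo := @geo_bound _ _ _ n.+1 (ltW c0) cy.
rewrite big_ord_recl /= subn0 expr0 mulr1 in geo.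
rewrite (eq_bigr (fun i : 'I_n => c ^+ (n - i) * u ^+ i.+1)) in geo; last first.
  by move=> i _; rewrite /bump /= add1n subSS.
set S := \sum_(i < n) _ in geo.
set g := \sum_(i < n) a (n - i)%N * y ^+ i.+1 + a 0%N * y ^+ n.+1.
have hS : `|\sum_(i < n) a (n - i)%N * y ^+ i.+1| <= `|a 0%N| * S.
  apply: (le_trans (ler_norm_sum _ _ _)); rewrite /S mulr_sumr.
  apply: ler_sum => i _; rewrite normrM normrX -/u mulrA.
  apply: ler_wpM2r; first exact: exprn_ge0 (normr_ge0 y).
  rewrite mulrC; apply: ha; by rewrite ltnS leq_subr.
have key : forall b, `|b| <= c ^+ n.+1 * `|a 0%N| -> b + g != 0.
  move=> b hb; rewrite -normr_gt0.
  have h1 : `|a 0%N * y ^+ n.+1| = `|a 0%N| * u ^+ n.+1 by rewrite normrM normrX.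
  have t1 : `|a 0%N * y ^+ n.+1| <= `|b + g| + `|b| + `|\sum_(i < n) a (n - i)%N * y ^+ i.+1|.
    have -> : a 0%N * y ^+ n.+1 = (b + g) - b - \sum_(i < n) a (n - i)%N * y ^+ i.+1.
      by rewrite /g; ring.
    apply: (le_trans (ler_normB _ _)); rewrite lerD2r.
    exact: ler_normB.
  have cn : 0 < c ^+ n.+1 by exact: exprn_gt0.
  have t2 : `|a 0%N| * (c ^+ n.+1 + S) <= `|a 0%N| * (u ^+ n.+1 - c ^+ n.+1).
    by rewrite ler_pM2l.
  have t3 : 0 < `|a 0%N| * c ^+ n.+1 by exact: mulr_gt0.
  rewrite mulrDr mulrBr in t2; rewrite h1 in t1; rewrite [c ^+ n.+1 * _]mulrC in hb.
  lra.
rewrite fpoly_split -/g.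
rewrite leNgt; apply/negP => hf.
suff hb : `|a n.+1 - (a n.+1 + g)| <= c ^+ n.+1 * `|a 0%N|.
  move: (key _ hb).
  have -> : a n.+1 - (a n.+1 + g) + g = 0 by ring.
  by rewrite eqxx.
move: hf; rewrite ltr_norml => /andP [h1 h2].
have [b0|b0] := lerP 0 (a n.+1 - (a n.+1 + g)).
  rewrite ger0_norm //; apply: le_trans hp; apply: le_trans (ler_norm _); lra.
rewrite ltr0_norm //; apply: le_trans hm; rewrite -normrN; apply: le_trans (ler_norm _); lra.
Qed.

Theorem mainTheorem16 (d : measure_display) (Omega : measurableType d)
  (R : realType) (P : probability Omega R) (w : {RV P >-> R})
  (eps rho K : R) (T : nat) (a : nat -> R) :
  0 < eps -> 0 < rho -> (0 < T)%N -> a 0%N != 0 -> 0 < K ->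
  (forall t : nat, (t < T)%N -> `|a t| <= (K * rho) ^+ t * `|a 0%N|) ->
  `|a T + eps| <= (K * rho) ^+ T * `|a 0%N| ->
  `|a T - eps| <= (K * rho) ^+ T * `|a 0%N| ->
  (P [set x | (2 * K <= `|w x|)%R] <=
   P [set x | (eps <= `|fpoly T a (rho * w x)|)%R])%E.
Proof.
move=> e0 r0 T0 a0 K0 ha hp hm.
have mw : measurable_fun setT w by exact: measurable_funPT.
have mset : forall f g : Omega -> R, measurable_fun setT f -> measurable_fun setT g ->
    measurable [set x | f x <= g x].
  move=> f g mf mg.
  have mt : measurable [set true] by [].
  have := measurable_realfun.measurable_fun_ler mf mg measurableT mt.
  by rewrite setTI.
apply: le_measure; rewrite ?inE.
- apply: mset; first exact: measurable_cst.
  exact: measurableT_comp.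
- apply: mset; first exact: measurable_cst.
  apply: measurableT_comp => //; rewrite /fpoly.
  apply: measurable_sum => t.
  apply: measurable_realfun.measurable_funM; first exact: measurable_cst.
  apply: measurable_realfun.measurable_funX; apply: measurable_realfun.measurable_funM => //; exact: measurable_cst.
- move=> x /= hx; apply: (@pointwise R T a eps (K * rho)) => //.
  + exact: mulr_gt0.
  + rewrite normrM (gtr0_norm r0); move: hx => /= hx; nra.
Qed.
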